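(* Let $\mathbb{K}$ be a field and let $A\in\mathbb{K}[x]^{m\times n}$ have rank $r\ge 1$. Let $K\in\mathbb{K}[x]^{n\times(n-r)}$ be a right kernel basis of $A$, and let $R\in\mathbb{K}[x]^{r\times n}$ be a left kernel basis of $K$. Then $A$ and $R$ have the same pivot support: $\rho(A)=\rho(R)$.
   Context: A right kernel basis of $A\in\mathbb{K}[x]^{m\times n}$ of rank $r$ is a matrix in $\mathbb{K}[x]^{n\times(n-r)}$ whose columns form a basis of the $\mathbb{K}[x]$-module $\{v\in\mathbb{K}[x]^{n\times 1}: Av=0\}$; a left kernel basis of $K\in\mathbb{K}[x]^{n\times k}$ is a matrix whose rows form a basis of $\{p\in\mathbb{K}[x]^{1\times n}: pK=0\}$ (when $k=0$ this is all of $\mathbb{K}[x]^{1\times n}$). For a row vector $p=[p_1,\dots,p_n]$, $\deg(p)=\max_j\deg(p_j)$; the pivot index of a nonzero $p$ is the largest $j$ with $\deg(p_j)=\deg(p)$, and $p_j$ is its pivot entry. A matrix $P\in\mathbb{K}[x]^{k\times n}$ is in Popov form if it has no zero row, the pivot indices of its rows are strictly increasing, its pivot entries are monic, and in each column containing a pivot entry all other entries have degree strictly less than that pivot entry. The Popov form of a matrix $M$ of rank $r$ is the unique matrix in $\mathbb{K}[x]^{r\times n}$ in Popov form whose rows generate the same $\mathbb{K}[x]$-module as the rows of $M$. The pivot support $\rho(M)\in\mathbb{Z}_{>0}^r$ of $M$ is the tuple of pivot indices of the rows of its Popov form (the empty tuple if $r=0$). *)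

(* Defs.v *)
From HB Require Import structures.
From mathcomp Require Import all_boot all_order all_algebra.
From Stdlib Require Import ClassicalEpsilon.
Set Implicit Arguments. Unset Strict Implicit. Unset Printing Implicit Defensive.
Import Order.TTheory GRing.Theory Num.Theory.
Local Open Scope ring_scope.

Section PolyMx.
Variable F : fieldType.
Local Notation P := {poly F}.

Definition prank m n (M : 'M[P]_(m, n)) : nat :=
  \rank (map_mx (@FracField.tofrac P) M).

Definition right_kernel_basis m n k (A : 'M[P]_(m, n)) (K : 'M[P]_(n, k)) : Prop :=
  (forall v : 'cV[P]_n, A *m v = 0 <-> exists c : 'cV[P]_k, v = K *m c) /\
  (forall c : 'cV[P]_k, K *m c = 0 -> c = 0).

Definition left_kernel_basis n k l (K : 'M[P]_(n, k)) (R : 'M[P]_(l, n)) : Prop :=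
  (forall p : 'rV[P]_n, p *m K = 0 <-> exists c : 'rV[P]_l, p = c *m R) /\
  (forall c : 'rV[P]_l, c *m R = 0 -> c = 0).

(* degree of a row vector, shifted by one: max of sizes (size = deg + 1) *)
Definition rowsize n (p : 'rV[P]_n) : nat := (\max_(j < n) size (p ord0 j))%N.

Definition pivot_index n (p : 'rV[P]_n) : nat :=
  (\max_(j < n | size (p ord0 j) == rowsize p) (j : nat))%N.

Definition is_popov k n (M : 'M[P]_(k, n)) : Prop :=
  (forall i : 'I_k, row i M != 0) /\
  (forall i i' : 'I_k, (i < i')%N ->
      (pivot_index (row i M) < pivot_index (row i' M))%N) /\
  (forall (i : 'I_k) (j : 'I_n), (j : nat) = pivot_index (row i M) ->
      M i j \is monic /\
      forall i' : 'I_k, i' != i -> (size (M i' j) < size (M i j))%N).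

Definition same_row_module m k n (M : 'M[P]_(m, n)) (Q : 'M[P]_(k, n)) : Prop :=
  forall p : 'rV[P]_n,
    (exists c : 'rV[P]_m, p = c *m M) <-> (exists d : 'rV[P]_k, p = d *m Q).

Definition popov_form_of m n (M : 'M[P]_(m, n)) (Q : 'M[P]_(prank M, n)) : Prop :=
  is_popov Q /\ same_row_module M Q.

Arguments popov_form_of {m n} M Q.

Definition pivots k n (Q : 'M[P]_(k, n)) : seq nat :=
  [seq pivot_index (row i Q) | i <- enum 'I_k].

(* pivot support: pivot indices of the (unique) Popov form of M *)
Definition pivot_support m n (M : 'M[P]_(m, n)) : seq nat :=
  epsilon (inhabits [::])
    (fun s => exists Q : 'M[P]_(prank M, n), popov_form_of M Q /\ s = pivots Q).

End PolyMx.

(* Main.v *)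
Require Import Defs.
From HB Require Import structures.
From mathcomp Require Import all_boot all_order all_algebra.
From mathcomp Require Import zify.
From Stdlib Require Import ClassicalEpsilon Classical.
Set Implicit Arguments. Unset Strict Implicit. Unset Printing Implicit Defensive.
Import GRing.Theory.
Local Open Scope ring_scope.


Lemma code_inj (e e' j j' n : nat) : (j < n)%N -> (j' < n)%N ->
  (e*n + j = e'*n+j')%N -> e = e' /\ j = j'.
Proof. move=> hj hj' E.
have n0 : (0 < n)%N by lia.
have := f_equal (divn ^~ n) E; rewrite /= !divnMDl // !divn_small // !addn0 => Ee.
split=> //; move: E; rewrite Ee; lia. Qed.

Lemma code_lex (a b x y n : nat) : (a*n + x <= b*n + y)%N -> (x < n)%N -> (y < n)%N ->
  (a < b)%N \/ (a = b /\ x <= y)%N.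
Proof. nia. Qed.

Section Piv.
Variable F : fieldType.
Local Notation P := {poly F}.

Lemma rowsize_ge n (p : 'rV[P]_n) j : (size (p ord0 j) <= rowsize p)%N.
Proof. exact: (leq_bigmax_cond j). Qed.

Lemma rowsize_le n (p : 'rV[P]_n) D : (forall j, size (p ord0 j) <= D)%N -> (rowsize p <= D)%N.
Proof. by move=> H; apply/bigmax_leqP => j _. Qed.

Lemma rowvec_nz n (p : 'rV[P]_n) : p != 0 -> exists j, p ord0 j != 0.
Proof.
move=> pn0; case: (pickP (fun j => p ord0 j != 0)) => [j Hj|H]; first by exists j.
have E : p = 0 by apply/rowP => j; rewrite mxE; move: (H j) => /= /negbFE/eqP.
by rewrite E eqxx in pn0.
Qed.

Lemma rowsize_attained n (p : 'rV[P]_n) : p != 0 ->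
  exists j, size (p ord0 j) = rowsize p.
Proof.
move=> /rowvec_nz [j0 _].
case: (@arg_maxnP _ j0 xpredT (fun j => size (p ord0 j)) isT) => j1 _ H1.
exists j1; apply/eqP; rewrite eqn_leq rowsize_ge /=.
by apply: rowsize_le => j; apply: H1.
Qed.

Lemma rowsize_gt0 n (p : 'rV[P]_n) : p != 0 -> (0 < rowsize p)%N.
Proof.
move=> /rowvec_nz [j Hj]; apply: leq_trans (rowsize_ge p j).
by rewrite size_poly_gt0.
Qed.

Lemma pivot_eq n (p : 'rV[P]_n) (j0 : 'I_n) : size (p ord0 j0) = rowsize p ->
  (forall j : 'I_n, (j0 < j)%N -> (size (p ord0 j) < rowsize p)%N) ->
  pivot_index p = j0.
Proof.
move=> H0 H; apply/eqP; rewrite eqn_leq; apply/andP; split.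
  apply/bigmax_leqP => j /eqP Hj; rewrite leqNgt; apply/negP => /H.
  by rewrite Hj ltnn.
by apply: (leq_bigmax_cond (F := fun j : 'I_n => (j : nat)) j0); rewrite H0.
Qed.

Lemma pivot_spec n (p : 'rV[P]_n) : p != 0 -> exists j0 : 'I_n,
  pivot_index p = j0 /\ size (p ord0 j0) = rowsize p /\
  forall j : 'I_n, (j0 < j)%N -> (size (p ord0 j) < rowsize p)%N.
Proof.
move=> /rowsize_attained [j1 H1].
case: (@arg_maxnP _ j1 (fun j => size (p ord0 j) == rowsize p) (fun j => (j : nat))).
  by rewrite H1.
move=> j0 /eqP H0 Hmax.
have Hlt : forall j : 'I_n, (j0 < j)%N -> (size (p ord0 j) < rowsize p)%N.
  move=> j Hj; rewrite ltn_neqAle rowsize_ge andbT; apply/negP => /Hmax.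
  move=> /=; lia.
by exists j0; split; [exact: pivot_eq|].
Qed.

Lemma size_sum_lt (I : finType) (Pr : pred I) (G : I -> P) B :
  (0 < B)%N -> (forall i, Pr i -> (size (G i) < B)%N) ->
  (size (\sum_(i | Pr i) G i)%R < B)%N.
Proof.
move=> B0 H; apply: (big_ind (fun x : P => size x < B)%N) => //.
  by rewrite size_poly0.
move=> x y hx hy; apply: leq_ltn_trans (size_polyD x y) _.
by rewrite gtn_max hx hy.
Qed.

Lemma ppl k n (Q : 'M[P]_(k, n)) :
  (forall i, row i Q != 0) ->
  (forall i i', pivot_index (row i Q) = pivot_index (row i' Q) -> i = i') ->
  forall c : 'rV_k, c != 0 -> c *m Q != 0 /\
    exists i, pivot_index (c *m Q) = pivot_index (row i Q).
Proof.
move=> Qnz Qinj c /rowvec_nz [i1 Hi1].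
pose t i := (size (c ord0 i) + rowsize (row i Q))%N.
pose pv i := pivot_index (row i Q).
have pvn : forall i, (pv i < n)%N.
  by move=> i; rewrite /pv; have [j [-> _]] := pivot_spec (Qnz i).
case: (@arg_maxnP _ i1 (fun i => c ord0 i != 0) (fun i => t i * n + pv i)%N Hi1).
move=> i0 Hc0 Hmax.
have [j0 [Hpj0 [Hsz0 Hgt0]]] := pivot_spec (Qnz i0).
have rs0 := rowsize_gt0 (Qnz i0).
have c0s : (0 < size (c ord0 i0))%N by rewrite size_poly_gt0.
set D := t i0.
have D2 : (2 <= D)%N by rewrite /D /t; lia.
have Qij : forall i j, row i Q ord0 j = Q i j by move=> i j; rewrite mxE.
have Hterm : forall i (j : 'I_n), (size (c ord0 i * Q i j)%R <= (size (c ord0 i) + size (Q i j)).-1)%N.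
  by move=> i j; apply: size_mul_leq.
have Hle : forall (j : 'I_n) i, (size (c ord0 i * Q i j)%R < D)%N.
  move=> j i; have [->|ci] := eqVneq (c ord0 i) 0; first by rewrite mul0r size_poly0; lia.
  have := Hmax i ci; move/code_lex => /(_ (pvn i) (pvn i0)) Hc.
  have := Hterm i j; have := rowsize_ge (row i Q) j; rewrite Qij /t in Hc * => h1 h2.
  rewrite /D /t in Hc *; case: Hc => [Hc|[Hc _]]; lia.
have Hlt : forall (j : 'I_n) i, (j0 <= j)%N -> (i != i0) || (j0 < j)%N ->
    (size (c ord0 i * Q i j)%R < D.-1)%N.
  move=> j i Hj Hij; have [->|ci] := eqVneq (c ord0 i) 0; first by rewrite mul0r size_poly0; lia.
  have := Hmax i ci; move/code_lex => /(_ (pvn i) (pvn i0)) Hc.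
  have := Hterm i j; have := rowsize_ge (row i Q) j; rewrite Qij => h1 h2.
  case: Hc => [Hc|[Hc Hpv]].
    rewrite /D /t in Hc *; lia.
  have Hsm : (size (Q i j) < rowsize (row i Q))%N.
    have [j' [Hj' [_ Hgt]]] := pivot_spec (Qnz i).
    rewrite -Qij; apply: Hgt; rewrite -Hj'.
    case/orP: Hij => [Hii|Hjj].
      have : pv i != pv i0 by apply: contra Hii => /eqP /Qinj ->.
      rewrite /pv Hpj0 -/(pv i) => Hne; move: Hpv; rewrite /pv Hpj0 -/(pv i); lia.
    move: Hpv; rewrite /pv Hpj0 -/(pv i); lia.
  rewrite /D /t in Hc *; lia.
have Hentry : forall j, (c *m Q) ord0 j = \sum_i c ord0 i * Q i j by move=> j; rewrite mxE.
have Hj0 : size ((c *m Q) ord0 j0) = D.-1.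
  rewrite Hentry (bigD1 i0) //= size_polyDl.
    rewrite size_mul // -?size_poly_gt0 -Qij ?Hsz0 //; lia.
  rewrite size_mul // -?size_poly_gt0 -?Qij ?Hsz0; last lia.
  apply: size_sum_lt; first by change (0 < D.-1)%N; lia.
  move=> i Hi; change (size (c ord0 i * Q i j0)%R < D.-1)%N; apply: Hlt => //; by rewrite Hi.
have Hrs : rowsize (c *m Q) = D.-1.
  apply/eqP; rewrite eqn_leq -{2}Hj0 rowsize_ge andbT.
  apply: rowsize_le => j; rewrite Hentry -ltnS.
  have -> : (D.-1.+1 = D)%N by lia.
  by apply: size_sum_lt => [|i _]; [lia| apply: Hle].
have Hpiv : pivot_index (c *m Q) = j0.
  apply: pivot_eq; first by rewrite Hrs.
  move=> j Hj; rewrite Hrs Hentry; apply: size_sum_lt; first lia.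
  by move=> i _; apply: Hlt; [lia| rewrite Hj orbT].
split; last by exists i0; rewrite Hpiv Hpj0.
apply/negP => /eqP E; move: Hj0; rewrite E mxE size_poly0; lia.
Qed.

End Piv.


Section Frac.
Variable F : fieldType.
Local Notation P := {poly F}.
Local Notation tf := (@FracField.tofrac P).

Lemma frac_num_den (x : {fraction P}) : exists a b : P, b != 0 /\ tf a = tf b * x.
Proof.
elim/quotW: x => r.
exists (\n_r), (\d_r); split; first exact: denom_ratioP.
unlock FracField.tofrac.
rewrite /=.
rewrite -[_ * _]/(FracField.mul _ _).
rewrite -FracField.pi_mul.
apply/eqmodP; rewrite /= FracField.equivfE.
rewrite !numden_Ratio ?oner_eq0 ?mul1r ?denom_ratioP //=.
by rewrite mulrC.
Qed.

Lemma clear_den k (v : 'rV[{fraction P}]_k) :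
  exists f : P, exists c : 'rV[P]_k, f != 0 /\ map_mx tf c = tf f *: v.
Proof.
have H : forall i : 'I_k, exists ab : P * P,
    ab.2 != 0 /\ tf ab.1 = tf ab.2 * v ord0 i.
  by move=> i; have [a [b [hb E]]] := frac_num_den (v ord0 i); exists (a, b).
have [ab Hab] := fin_all_exists H.
exists (\prod_i (ab i).2), (\row_i ((ab i).1 * \prod_(l | l != i) (ab l).2)).
split; first by apply/prodf_neq0 => i _; case: (Hab i).
apply/rowP => i; rewrite !mxE rmorphM -[X in X * _ = _]/(tf (ab i).1) (proj2 (Hab i)) [in RHS](bigD1 i) //= rmorphM.
by rewrite mulrAC.
Qed.

Lemma map_tf_eq0 m n (X : 'M[P]_(m, n)) : map_mx tf X = 0 -> X = 0.
Proof.
move=> E; apply/matrixP => i j; move/matrixP: E => /(_ i j); rewrite !mxE.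
by move/eqP; rewrite tofrac_eq0 => /eqP.
Qed.

Lemma rank_free k n (Q : 'M[P]_(k, n)) :
  (forall c : 'rV_k, c *m Q = 0 -> c = 0) -> \rank (map_mx tf Q) = k.
Proof.
move=> H; apply/eqP; rewrite -[_ == _]/(row_free _) -kermx_eq0.
apply/eqP/row_matrixP => i; rewrite row0.
set v := row i _.
have v0 : v *m map_mx tf Q = 0 by rewrite /v -row_mul mulmx_ker row0.
have [f [c [fn0 Ec]]] := clear_den v.
have : c *m Q = 0.
  apply: map_tf_eq0; rewrite map_mxM Ec -scalemxAl v0 scaler0.
  by apply/matrixP => a b; rewrite !mxE.
move/H => c0; move: Ec; rewrite c0 => /esym /eqP.
rewrite (_ : map_mx tf 0 = 0); last by apply/matrixP => a b; rewrite !mxE.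
by rewrite scaler_eq0 tofrac_eq0 (negbTE fn0) => /eqP.
Qed.

Definition rmod m n (M : 'M[P]_(m, n)) (p : 'rV[P]_n) := exists c, p = c *m M.

Lemma rank_sub m k n (Q : 'M[P]_(k, n)) (M : 'M[P]_(m, n)) :
  (forall i, rmod M (row i Q)) -> (map_mx tf Q <= map_mx tf M)%MS.
Proof.
move=> H; apply/row_subP => i; have [c Ec] := H i.
by rewrite -map_row Ec map_mxM submxMl.
Qed.

Lemma rmod_rows m k n (Q : 'M[P]_(k, n)) (M : 'M[P]_(m, n)) :
  (forall i, rmod M (row i Q)) -> forall p, rmod Q p -> rmod M p.
Proof.
move=> H p [d ->]; have [C HC] := fin_all_exists H.
exists (d *m \matrix_i C i); rewrite -mulmxA; congr (_ *m _).
by apply/row_matrixP => i; rewrite row_mul rowK HC.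
Qed.

Lemma rmod_row m n (M : 'M[P]_(m, n)) i : rmod M (row i M).
Proof. by exists (delta_mx 0 i); rewrite -rowE. Qed.

Lemma rmod0 m n (M : 'M[P]_(m, n)) : rmod M 0.
Proof. by exists 0; rewrite mul0mx. Qed.

Lemma rmodD m n (M : 'M[P]_(m, n)) p q : rmod M p -> rmod M q -> rmod M (p + q).
Proof. by move=> [c ->] [d ->]; exists (c + d); rewrite mulmxDl. Qed.

Lemma rmodZ m n (M : 'M[P]_(m, n)) a p : rmod M p -> rmod M (a *: p).
Proof. by move=> [c ->]; exists (a *: c); rewrite scalemxAl. Qed.

Lemma rmodN m n (M : 'M[P]_(m, n)) p : rmod M p -> rmod M (- p).
Proof. by move=> H; rewrite -scaleN1r; apply: rmodZ. Qed.

Definition PivSet m n (M : 'M[P]_(m, n)) (x : nat) :=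
  exists p, rmod M p /\ p != 0 /\ pivot_index p = x.

Lemma popov_pivots m k n (M : 'M[P]_(m, n)) (Q : 'M[P]_(k, n)) :
  is_popov Q -> same_row_module M Q ->
  sorted ltn (pivots Q) /\ forall x, (x \in pivots Q) <-> PivSet M x.
Proof.
move=> [Qnz [Qinc _]] Hsame.
have Qinj : forall i i', pivot_index (row i Q) = pivot_index (row i' Q) -> i = i'.
  move=> i i' E; case: (ltngtP i i') => [h|h|h]; last exact/val_inj.
    by have := Qinc _ _ h; rewrite E ltnn.
  by have := Qinc _ _ h; rewrite E ltnn.
split.
  rewrite /pivots; apply: (homo_sorted (e := relpre val ltn)).
    by move=> i i' /= h; apply: Qinc.
  by rewrite -sorted_map val_enum_ord iota_ltn_sorted.
move=> x; split.
  case/mapP => i _ ->; exists (row i Q); split => //.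
  by apply/Hsame; exists (delta_mx 0 i); rewrite -rowE.
move=> [p [/Hsame [d Ed] [pn0 <-]]].
have dn0 : d != 0 by apply: contraNneq pn0 => d0; rewrite Ed d0 mul0mx.
have [_ [i Hi]] := ppl Qnz Qinj dn0.
by apply/mapP; exists i; rewrite ?mem_enum // Ed Hi.
Qed.

End Frac.


Lemma enum_val_mono n (A : {set 'I_n}) (i i' : 'I_#|A|) : (i < i')%N -> (enum_val i < enum_val i')%N.
Proof.
move=> h; pose x0 := enum_val i.
rewrite (enum_val_nth x0 i) (enum_val_nth x0 i').
have srt : sorted (relpre val ltn) (enum A).
  rewrite -deprecated_filter_index_enum; apply: sorted_filter.
    by move=> a b c; apply: ltn_trans.
  have := deprecated_filter_index_enum (T:='I_n) xpredT; rewrite filter_predT => ->.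
  by rewrite -sorted_map val_enum_ord iota_ltn_sorted.
apply: (sorted_ltn_nth _ _ srt) => //.
- by move=> a b c; apply: ltn_trans.
- by rewrite inE -cardE.
- by rewrite inE -cardE.
Qed.

Definition asb (Q : Prop) : bool := if excluded_middle_informative Q then true else false.
Lemma asbP (Q : Prop) : reflect Q (asb Q).
Proof. by rewrite /asb; case: excluded_middle_informative => h; constructor. Qed.

Section Gen.
Variable F : fieldType.
Local Notation P := {poly F}.

Lemma size_ext n (p q : 'rV[P]_n) : (forall j, size (p ord0 j) = size (q ord0 j)) ->
  rowsize p = rowsize q /\ pivot_index p = pivot_index q.
Proof.
move=> H; have E : rowsize p = rowsize q by apply: eq_bigr => j _; rewrite H.
split => //; rewrite /pivot_index; apply: eq_bigl => j; by rewrite H E.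
Qed.

Lemma coef_nz_lt (q : P) e : q`_e != 0 -> (e < size q)%N.
Proof. by move=> h; rewrite ltnNge; apply: contra h => /leq_sizeP ->. Qed.

Lemma monomial_bound n (q : 'rV[P]_n) (j : 'I_n) d : q != 0 -> pivot_index q = j ->
  rowsize q = d.+1 -> forall (j' : 'I_n) e', (q ord0 j')`_e' != 0 -> (e' * n + j' <= d * n + j)%N.
Proof.
move=> qn0 Hp Hr j' e' Hc.
have [j0 [Hj0 [Hs Hgt]]] := pivot_spec qn0.
have jj0 : j0 = j by apply: val_inj; rewrite /= -Hj0 Hp.
subst j0.
have he : (e' < size (q ord0 j'))%N := coef_nz_lt Hc.
have := rowsize_ge q j'; rewrite Hr => hs.
have hj' := ltn_ord j'; have hj := ltn_ord j.
case: (ltngtP e' d) => h.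
- nia.
- lia.
- subst e'; case: (ltngtP j' j) => h2; [lia| |lia].
  have := Hgt _ h2; rewrite Hr; lia.
Qed.

Lemma code_pivot n (q : 'rV[P]_n) (j : 'I_n) d : (q ord0 j)`_d != 0 ->
  (forall (j' : 'I_n) e', (q ord0 j')`_e' != 0 -> (e' * n + j' <= d * n + j)%N) ->
  [/\ rowsize q = d.+1, pivot_index q = j & lead_coef (q ord0 j) = (q ord0 j)`_d].
Proof.
move=> Hd Hb.
have hj := ltn_ord j.
have Hall : forall j' : 'I_n, (size (q ord0 j') <= d.+1)%N.
  move=> j'; rewrite leqNgt; apply/negP => hgt.
  have hnz : (q ord0 j')`_(size (q ord0 j')).-1 != 0.
    by rewrite -lead_coefE lead_coef_eq0 -size_poly_gt0; lia.
  have := Hb _ _ hnz; have := ltn_ord j'.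
  move: hgt; set s := size _ => hgt hj' hb.
  have : ((d.+1) * n <= s.-1 * n)%N by apply: leq_mul; lia.
  nia.
have Hsz : size (q ord0 j) = d.+1.
  by apply/eqP; rewrite eqn_leq Hall /=; apply: coef_nz_lt.
have Hrs : rowsize q = d.+1.
  by apply/eqP; rewrite eqn_leq (rowsize_le Hall) /= -Hsz rowsize_ge.
split => //; last by rewrite lead_coefE Hsz.
apply: pivot_eq; first by rewrite Hsz Hrs.
move=> j' hj'; rewrite Hrs ltnS leqNgt; apply/negP => hgt.
have hs : size (q ord0 j') = d.+1 by apply/eqP; rewrite eqn_leq Hall.
have hnz : (q ord0 j')`_d != 0.
  by rewrite -[d]/(d.+1.-1) -hs -lead_coefE lead_coef_eq0 -size_poly_gt0 hs.
have := Hb _ _ hnz; lia.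
Qed.

Variables (m n : nat) (M : 'M[P]_(m, n)).
Local Notation inJ j := (PivSet M (nat_of_ord j)).

Lemma min_elt (j : 'I_n) : inJ j -> exists w : 'rV_n, rmod M w /\ w != 0 /\
  pivot_index w = j /\ w ord0 j \is monic /\
  forall p, rmod M p -> p != 0 -> pivot_index p = j -> (rowsize w <= rowsize p)%N.
Proof.
move=> [p0 [Hp0 [p0n0 Hpv0]]].
have : exists w, rmod M w /\ w != 0 /\ pivot_index w = j /\
  forall p, rmod M p -> p != 0 -> pivot_index p = j -> (rowsize w <= rowsize p)%N.
  suff : forall N p, rmod M p -> p != 0 -> pivot_index p = j -> (rowsize p <= N)%N ->
    exists w, rmod M w /\ w != 0 /\ pivot_index w = j /\
    forall p, rmod M p -> p != 0 -> pivot_index p = j -> (rowsize w <= rowsize p)%N.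
    by move=> H; apply: (H _ p0 Hp0 p0n0 Hpv0 (leqnn _)).
  elim=> [|N IH] p Hp pn0 Hpv Hle.
    by exists p; do 3!split => //; move=> q _ _ _; apply: leq_trans Hle _.
  case: (classic (exists q, rmod M q /\ q != 0 /\ pivot_index q = j /\ (rowsize q <= N)%N)).
    by move=> [q [Hq [qn0 [Hqv Hqle]]]]; apply: (IH q).
  move=> Hno; exists p; do 3!split => //.
  move=> q Hq qn0 Hqv; apply: leq_trans Hle _; rewrite ltnNge; apply/negP => hq.
  by apply: Hno; exists q.
move=> [w [Hw [wn0 [Hwv Hmin]]]].
have [j0 [Hj0 [Hs _]]] := pivot_spec wn0.
have jj0 : j0 = j by apply: val_inj; rewrite /= -Hj0 Hwv.
subst j0.
have wj0 : w ord0 j != 0 by rewrite -size_poly_gt0 Hs rowsize_gt0.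
set c := (lead_coef (w ord0 j))^-1.
have c0 : c != 0 by rewrite invr_eq0 lead_coef_eq0.
have Hsz : forall j', size ((c%:P *: w) ord0 j') = size (w ord0 j').
  by move=> j'; rewrite mxE mul_polyC size_scale.
have [Er Ep] := size_ext Hsz.
exists (c%:P *: w); split; first exact: rmodZ.
split.
  apply/negP => /eqP E; move: (Hsz j); rewrite E mxE size_poly0 => h.
  by move: wj0; rewrite -size_poly_gt0 -h.
split; first by rewrite Ep.
split; first by rewrite monicE mxE mul_polyC lead_coefZ mulVf // lead_coef_eq0.
by move=> p Hp pn0 Hpv; rewrite Er; apply: Hmin.
Qed.

Lemma w_exists : exists w : 'I_n -> 'rV[P]_n, forall j, inJ j ->
  rmod M (w j) /\ w j != 0 /\
  pivot_index (w j) = j /\ (w j) ord0 j \is monic /\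
  forall p, rmod M p -> p != 0 -> pivot_index p = j -> (rowsize (w j) <= rowsize p)%N.
Proof.
have H : forall j : 'I_n, exists w : 'rV[P]_n, inJ j ->
  rmod M w /\ w != 0 /\
  pivot_index w = j /\ w ord0 j \is monic /\
  forall p, rmod M p -> p != 0 -> pivot_index p = j -> (rowsize w <= rowsize p)%N.
  move=> j; case: (classic (inJ j)) => h; last by exists 0.
  by have [w Hw] := min_elt h; exists w.
exact: fin_all_exists H.
Qed.

End Gen.


Section NF.
Variable F : fieldType.
Local Notation P := {poly F}.
Variables (m n : nat) (M : 'M[P]_(m, n)).
Local Notation inJ j := (PivSet M (nat_of_ord j)).
Variable w : 'I_n -> 'rV[P]_n.
Hypothesis Hw : forall j, inJ j ->
  rmod M (w j) /\ w j != 0 /\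
  pivot_index (w j) = j /\ (w j) ord0 j \is monic /\
  forall p, rmod M p -> p != 0 -> pivot_index p = j -> (rowsize (w j) <= rowsize p)%N.

Definition dg (j : 'I_n) := (rowsize (w j)).-1.

Definition std (s : 'rV[P]_n) := forall (j : 'I_n) e, inJ j -> (dg j <= e)%N -> (s ord0 j)`_e = 0.

Lemma w_props j : inJ j -> ((w j) ord0 j)`_(dg j) = 1 /\
  forall (j' : 'I_n) e', ((w j) ord0 j')`_e' != 0 -> (e' * n + j' <= dg j * n + j)%N.
Proof.
move=> hj; have [_ [wn0 [Hpv [Hmon _]]]] := Hw hj.
have rs := rowsize_gt0 wn0.
have Hr : rowsize (w j) = (dg j).+1 by rewrite /dg; lia.
split; last exact: monomial_bound wn0 Hpv Hr.
have [j0 [Hj0 [Hs _]]] := pivot_spec wn0.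
have jj0 : j0 = j by apply: val_inj; rewrite /= -Hj0 Hpv.
subst j0.
by move/monicP: Hmon; rewrite lead_coefE Hs Hr.
Qed.

Lemma nf (S : 'rV[P]_n -> Prop) (g : 'I_n -> 'rV[P]_n) :
  S 0 -> (forall a b, S a -> S b -> S (a + b)) -> (forall (c : P) a, S a -> S (c *: a)) ->
  (forall j, inJ j -> S (g j) /\ ((g j) ord0 j)`_(dg j) = 1 /\
    forall (j' : 'I_n) e', ((g j) ord0 j')`_e' != 0 -> (e' * n + j' <= dg j * n + j)%N) ->
  forall N (v : 'rV[P]_n) B, (forall (j : 'I_n) e, (v ord0 j)`_e != 0 -> (e * n + j < B)%N) ->
  (forall (j : 'I_n) e, inJ j -> (dg j <= e)%N -> (v ord0 j)`_e != 0 -> (e * n + j < N)%N) ->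
  exists u s, S u /\ std s /\ (forall (j : 'I_n) e, (s ord0 j)`_e != 0 -> (e * n + j < B)%N)
    /\ v = u + s.
Proof.
move=> S0 SD SZ Hg; elim=> [|N IH] v B HB Hnon.
  exists 0, v; split => //; split; last by rewrite add0r.
  move=> j e Hj He; apply/eqP; apply: contraT => Hc.
  by have := Hnon j e Hj He Hc.
case: (classic (exists (j : 'I_n) e, inJ j /\ (dg j <= e)%N /\ (v ord0 j)`_e != 0
    /\ (e * n + j = N)%N)); last first.
  move=> Hno; apply: IH => // j e Hj He Hc.
  have := Hnon j e Hj He Hc; rewrite ltnS leq_eqVlt => /orP [/eqP E|//].
  by exfalso; apply: Hno; exists j, e.
move=> [j0 [e [Hj [He [Hc Hcode]]]]].
have [Sg [Hg1 Hgb]] := Hg j0 Hj.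
set c := (v ord0 j0)`_e.
set kk := (e - dg j0)%N.
set t := (c *: 'X^kk) *: g j0.
have ct : forall (j' : 'I_n) e', (t ord0 j')`_e' =
    c * (if (e' < kk)%N then 0 else ((g j0) ord0 j')`_(e' - kk)).
  by move=> j' e'; rewrite /t mxE -scalerAl coefZ coefXnM.
have Tcode : forall (j' : 'I_n) e', (t ord0 j')`_e' != 0 -> (e' * n + j' <= N)%N.
  move=> j' e'; rewrite ct; case: ifP => hlt; first by rewrite mulr0 eqxx.
  move=> hnz; have hg : ((g j0) ord0 j')`_(e' - kk) != 0.
    by apply: contraNneq hnz => ->; rewrite mulr0.
  have := Hgb _ _ hg; rewrite -Hcode.
  have ee : e = (kk + dg j0)%N by rewrite /kk; lia.
  have ee' : e' = ((e' - kk) + kk)%N by move/negbT: hlt; rewrite -leqNgt; lia.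
  rewrite {2}ee' ee !mulnDl; lia.
have Tlead : (t ord0 j0)`_e = c.
  rewrite ct ifF; last by apply/negbTE; rewrite -leqNgt /kk leq_subr.
  by rewrite (_ : (e - kk = dg j0)%N) ?Hg1 ?mulr1 // /kk; lia.
have NB : (N < B)%N by rewrite -Hcode; apply: HB.
set v' := v - t.
have cv' : forall j' e', (v' ord0 j')`_e' = (v ord0 j')`_e' - (t ord0 j')`_e'.
  by move=> j' e'; rewrite /v' !mxE coefB.
have [u' [s [Su' [Ss [HBs Ev']]]]] : exists u s, S u /\ std s /\
    (forall (j : 'I_n) e, (s ord0 j)`_e != 0 -> (e * n + j < B)%N) /\ v' = u + s.
  apply: IH.
    move=> j' e'; rewrite cv' => h.
    have [hv|hv] := eqVneq ((v ord0 j')`_e') 0.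
      by have := Tcode j' e'; rewrite hv sub0r oppr_eq0 in h; move=> /(_ h); lia.
    exact: HB.
  move=> j' e' Hj' He' h; rewrite ltnNge; apply/negP => hge.
  move: h; rewrite cv'; case: (ltngtP (e' * n + j') N) => hc.
  - lia.
  - have ht : (t ord0 j')`_e' = 0.
      by apply/eqP; apply: contraT => /Tcode; lia.
    rewrite ht subr0 => hv; have := Hnon _ _ Hj' He' hv; lia.
  - have [E1 E2] := code_inj (ltn_ord j') (ltn_ord j0) (etrans hc (esym Hcode)).
    have E3 : j' = j0 by apply: val_inj.
    by rewrite E1 E3 Tlead subrr eqxx.
exists (u' + t), s; split; first by apply: SD => //; apply: SZ.
split => //; split => //.
by rewrite -addrA [t + s]addrC addrA -Ev' subrK.
Qed.

Lemma std_zero s : rmod M s -> std s -> s = 0.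
Proof.
move=> Hs Hstd; apply/eqP; apply: contraT => sn0.
have [j0 [Hj0 [Hsz _]]] := pivot_spec sn0.
have Hj : inJ j0 by exists s.
have [_ [wn0 [_ [_ Hmin]]]] := Hw Hj.
have := Hmin s Hs sn0 Hj0 => hle.
have rs := rowsize_gt0 sn0.
have hd : (dg j0 <= (size (s ord0 j0)).-1)%N by rewrite /dg Hsz; lia.
have := Hstd j0 _ Hj hd; rewrite -lead_coefE => /eqP; rewrite lead_coef_eq0 => /eqP h0.
by move: Hsz; rewrite h0 size_poly0; lia.
Qed.

End NF.


Section Cons.
Variable F : fieldType.
Local Notation P := {poly F}.
Variables (m n : nat) (M : 'M[P]_(m, n)).
Local Notation inJ j := (PivSet M (nat_of_ord j)).
Variable w : 'I_n -> 'rV[P]_n.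
Hypothesis Hw : forall j, inJ j ->
  rmod M (w j) /\ w j != 0 /\
  pivot_index (w j) = j /\ (w j) ord0 j \is monic /\
  forall p, rmod M p -> p != 0 -> pivot_index p = j -> (rowsize (w j) <= rowsize p)%N.
Local Notation dg := (dg w).
Local Notation std := (std M w).

Definition pprops (j : 'I_n) (p : 'rV[P]_n) :=
  rmod M p /\ p != 0 /\ pivot_index p = j /\ p ord0 j \is monic /\
  size (p ord0 j) = (dg j).+1 /\
  (forall j' : 'I_n, j' != j -> inJ j' -> (size (p ord0 j') <= dg j')%N) /\
  (p ord0 j)`_(dg j) = 1 /\
  (forall (j' : 'I_n) e', (p ord0 j')`_e' != 0 -> (e' * n + j' <= dg j * n + j)%N).

Lemma pj_exists j : inJ j -> exists p, pprops j p.
Proof.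
move=> hj; have [Hw1 _] := Hw hj; have [Hg1 Hgb] := w_props Hw hj.
set E := 'X^(dg j) *: (delta_mx 0 j : 'rV[P]_n).
have cE : forall (j' : 'I_n) e', (E ord0 j')`_e' = ((j' == j) && (e' == dg j))%:R.
  move=> j' e'; rewrite !mxE eqxx /=; case: (j' == j) => /=.
    by rewrite mulr1 coefXn.
  by rewrite mulr0 coef0.
clearbody E.
have hjn := ltn_ord j.
set B := (dg j * n + j)%N.
have HB : forall (j' : 'I_n) e', ((E - w j) ord0 j')`_e' != 0 -> (e' * n + j' < B)%N.
  move=> j' e'; rewrite !mxE coefB cE.
  case: (boolP ((j' == j) && (e' == dg j))) => [/andP [/eqP -> /eqP ->]|hne].
    by rewrite Hg1 subrr eqxx.
  rewrite sub0r oppr_eq0 => hc; have := Hgb _ _ hc; rewrite leq_eqVlt => /orP [/eqP h|//].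
  have [E1 E2] := code_inj (ltn_ord j') hjn h.
  by move: hne; rewrite E1 (_ : j' = j) ?eqxx //; apply: val_inj.
have [u [s [Su [Ss [HBs Ev]]]]] := nf (w := w) (rmod0 M) (@rmodD _ _ _ M) (@rmodZ _ _ _ M)
  (fun j' hj' => conj (proj1 (Hw hj')) (w_props Hw hj')) HB
  (fun j' e' _ _ h => HB j' e' h).
have Ep : w j + u = E - s.
  have -> : u = E - w j - s by rewrite Ev addrK.
  by rewrite addrA [w j + _]addrC subrK.
exists (w j + u).
have cp : forall (j' : 'I_n) e', ((w j + u) ord0 j')`_e' = ((j' == j) && (e' == dg j))%:R - (s ord0 j')`_e'.
  by move=> j' e'; rewrite Ep !mxE coefB cE.
have c1 : ((w j + u) ord0 j)`_(dg j) = 1 by rewrite cp !eqxx Ss // subr0.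
have cb : forall (j' : 'I_n) e', ((w j + u) ord0 j')`_e' != 0 -> (e' * n + j' <= B)%N.
  move=> j' e'; rewrite cp.
  case: (boolP ((j' == j) && (e' == dg j))) => [/andP [/eqP -> /eqP ->] _ //|_].
  by rewrite sub0r oppr_eq0 => /HBs /ltnW.
have c1nz : ((w j + u) ord0 j)`_(dg j) != 0 by rewrite c1 oner_eq0.
have [Hrs Hpv Hlc] := code_pivot c1nz cb.
have pn0 : w j + u != 0.
  by apply: contraNneq c1nz => ->; rewrite mxE coef0.
have [j0 [Hj0 [Hsz _]]] := pivot_spec pn0.
have jj0 : j0 = j by apply: val_inj; rewrite /= -Hj0 Hpv.
subst j0.
split; first exact: rmodD.
split => //; split => //.
split; first by rewrite monicE Hlc c1.
split; first by rewrite Hsz Hrs.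
split.
  move=> j' hne hj'; apply/leq_sizeP => e' he'.
  by rewrite cp (negbTE hne) /= Ss // subr0.
by split.
Qed.


Lemma popov_exists_w : exists Q : 'M[P]_(prank M, n), @popov_form_of _ _ _ M Q.
Proof.
have H : forall j : 'I_n, exists p, inJ j -> pprops j p.
  move=> j; case: (classic (inJ j)) => h; last by exists 0.
  by have [p Hp] := pj_exists h; exists p.
have [p Hp0] := fin_all_exists H.
have Hp : forall j, inJ j -> pprops j (p j) := Hp0.
pose Jset := [set j : 'I_n | asb (inJ j)].
have inJP : forall j, (j \in Jset) -> inJ j by move=> j; rewrite inE => /asbP.
have JinP : forall j, inJ j -> (j \in Jset) by move=> j h; rewrite inE; apply/asbP.
pose Q := \matrix_(i < #|Jset|) p (enum_val i).
have rQ : forall i, row i Q = p (enum_val i) by move=> i; rewrite rowK.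
have Hpi : forall i : 'I_#|Jset|, pprops (enum_val i) (p (enum_val i)).
  by move=> i; apply: Hp; apply: inJP; apply: enum_valP.
have rowsM : forall i : 'I_#|Jset|, rmod M (row i Q) by move=> i; rewrite rQ; case: (Hpi i).
have Qnz : forall i : 'I_#|Jset|, row i Q != 0 by move=> i; rewrite rQ; case: (Hpi i) => _ [].
have Qpv : forall i : 'I_#|Jset|, pivot_index (row i Q) = enum_val i.
  by move=> i; rewrite rQ; case: (Hpi i) => _ [_ []].
have Qinj : forall i i' : 'I_#|Jset|, pivot_index (row i Q) = pivot_index (row i' Q) -> i = i'.
  by move=> i i'; rewrite !Qpv => /val_inj /enum_val_inj.
have pQ : forall j, inJ j -> rmod Q (p j).
  move=> j hj; have hJ := JinP _ hj.
  by rewrite -(enum_rankK_in hJ hJ) -rQ; apply: rmod_row.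
have gen : forall x, rmod M x -> rmod Q x.
  move=> x Hx.
  have HB : forall (j : 'I_n) e, (x ord0 j)`_e != 0 -> (e * n + j < rowsize x * n)%N.
    move=> j e hc; have h1 := coef_nz_lt hc; have h2 := rowsize_ge x j.
    have h3 := ltn_ord j.
    have : (e.+1 * n <= rowsize x * n)%N by apply: leq_mul => //; apply: leq_trans h2.
    nia.
  have Hg : forall j, inJ j -> rmod Q (p j) /\ ((p j) ord0 j)`_(dg j) = 1 /\
      forall (j' : 'I_n) e', ((p j) ord0 j')`_e' != 0 -> (e' * n + j' <= dg j * n + j)%N.
    move=> j hj; have [_ [_ [_ [_ [_ [_ [h1 h2]]]]]]] := Hp j hj.
    by split; [exact: pQ|split].
  have [u [s [Su [Ss [_ Ex]]]]] := nf (w := w) (rmod0 Q) (@rmodD _ _ _ Q) (@rmodZ _ _ _ Q)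
    Hg HB (fun j e _ _ h => HB j e h).
  have sM : rmod M s.
    have -> : s = x - u by rewrite Ex addrAC subrr add0r.
    by apply: rmodD => //; apply: rmodN; apply: (rmod_rows rowsM).
  by move: Ex; rewrite (std_zero Hw sM Ss) addr0 => ->.
have Hsame : same_row_module M Q.
  by move=> x; split; [move/gen|move/(rmod_rows rowsM)].
have card : #|Jset| = prank M.
  rewrite /prank.
  have <- : \rank (map_mx (@FracField.tofrac P) Q) = #|Jset|.
    apply: rank_free => c Hc; apply/eqP; apply: contraT => cn0.
    by have [h _] := ppl Qnz Qinj cn0; rewrite Hc eqxx in h.
  apply/eqP; rewrite eqn_leq; apply/andP; split; apply: mxrankS; apply: rank_sub => //.
  by move=> i; apply: gen; apply: rmod_row.
rewrite /popov_form_of -card.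
exists Q; split => //.
split => //; split.
  by move=> i i' h; rewrite !Qpv; apply: enum_val_mono.
move=> i j Hj.
have ej : j = enum_val i by apply: val_inj; rewrite /= Hj Qpv.
subst j.
have [_ [_ [_ [Hmon [Hsz [Hoff _]]]]]] := Hpi i.
have Q_ij : forall a b, Q a b = p (enum_val a) ord0 b by move=> a b; rewrite mxE.
split; first by rewrite Q_ij.
move=> i' hi'.
rewrite !Q_ij Hsz ltnS.
have [_ [_ [_ [_ [_ [Hoff' _]]]]]] := Hpi i'.
apply: Hoff'; last by apply: inJP; apply: enum_valP.
by apply: contra hi' => /eqP /enum_val_inj ->.
Qed.

End Cons.

Lemma popov_exists (F : fieldType) m n (M : 'M[{poly F}]_(m, n)) :
  exists Q : 'M[{poly F}]_(prank M, n), @popov_form_of _ _ _ M Q.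
Proof. by have [w Hw] := w_exists M; apply: popov_exists_w Hw. Qed.



Section Final.
Variable F : fieldType.
Local Notation P := {poly F}.
Local Notation tf := (@FracField.tofrac P).

Lemma ps_spec m n (M : 'M[P]_(m, n)) :
  sorted ltn (pivot_support M) /\ forall x, (x \in pivot_support M) <-> PivSet M x.
Proof.
have ex : exists s, exists Q : 'M[P]_(prank M, n), @popov_form_of _ _ _ M Q /\ s = pivots Q.
  by have [Q HQ] := popov_exists M; exists (pivots Q), Q.
rewrite /pivot_support.
have [Q [[HP Hs] ->]] := epsilon_spec (inhabits [::]) _ ex.
exact: popov_pivots HP Hs.
Qed.

Lemma map_tf_inj m n (X Y : 'M[P]_(m, n)) : map_mx tf X = map_mx tf Y -> X = Y.
Proof.
move=> E; apply/eqP; rewrite -subr_eq0; apply/eqP; apply: map_tf_eq0.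
by rewrite map_mxB E subrr.
Qed.

Lemma pivot_scale n (p : 'rV[P]_n) (f : P) : f != 0 -> p != 0 ->
  f *: p != 0 /\ pivot_index (f *: p) = pivot_index p.
Proof.
move=> fn0 pn0; have [j0 [Hj0 [Hs Hgt]]] := pivot_spec pn0.
have rs := rowsize_gt0 pn0.
have sf : (0 < size f)%N by rewrite size_poly_gt0.
have ent : forall j, (f *: p) ord0 j = f * p ord0 j by move=> j; rewrite mxE.
have pj0 : p ord0 j0 != 0 by rewrite -size_poly_gt0 Hs.
have e0 : size ((f *: p) ord0 j0) = (size f + rowsize p).-1.
  by rewrite ent size_mul // Hs.
have ub : forall j, (size ((f *: p) ord0 j) <= (size f + size (p ord0 j)).-1)%N.
  by move=> j; rewrite ent; apply: size_mul_leq.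
have Hrs : rowsize (f *: p) = (size f + rowsize p).-1.
  apply/eqP; rewrite eqn_leq -{2}e0 rowsize_ge andbT; apply: rowsize_le => j.
  apply: leq_trans (ub j) _; rewrite -subn1 -[X in (_ <= X)%N]subn1 leq_sub2r //.
  by rewrite leq_add2l rowsize_ge.
have nz : f *: p != 0.
  apply/negP => /eqP E; move: e0; rewrite E mxE size_poly0; lia.
split => //; rewrite Hj0; apply: pivot_eq; first by rewrite e0 Hrs.
move=> j hj; rewrite Hrs; apply: leq_ltn_trans (ub j) _.
rewrite -subn1 -[X in (_ < X)%N]subn1 ltn_sub2r //; last by rewrite ltn_add2l; apply: Hgt.
exact: (leq_add sf rs).
Qed.

Lemma pivset_eq m n (A : 'M[P]_(m, n)) r (hr : prank A = r)
  (K : 'M[P]_(n, n - r)) (R : 'M[P]_(r, n)) :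
  right_kernel_basis A K -> left_kernel_basis K R ->
  forall x, PivSet A x <-> PivSet R x.
Proof.
move=> [H1 H2] [L1 L2].
have AK : A *m K = 0.
  apply/matrixP => i j.
  have : A *m (K *m (delta_mx j 0 : 'cV_(n - r))) = 0 by apply: (proj2 (H1 _)); exists (delta_mx j 0).
  by rewrite mulmxA -colE => /matrixP /(_ i 0); rewrite !mxE.
have RK : R *m K = 0.
  apply/matrixP => i j.
  have : ((delta_mx 0 i : 'rV_r) *m R) *m K = 0 by apply: (proj2 (L1 _)); exists (delta_mx 0 i).
  by rewrite -mulmxA -rowE => /matrixP /(_ 0 j); rewrite !mxE.
move=> x; split.
  move=> [p [[c Ec] [pn0 Hpv]]]; exists p; split => //.
  by apply: (proj1 (L1 _)); rewrite Ec -mulmxA AK mulmx0.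
move=> [p [[d Ed] [pn0 Hpv]]].
have pK : p *m K = 0 by rewrite Ed -mulmxA RK mulmx0.
set Ap := map_mx tf A; set Kp := map_mx tf K.
have rK : \rank Kp = (n - r)%N.
  rewrite -mxrank_tr /Kp map_trmx; apply: rank_free => c Hc.
  apply: trmx_inj; rewrite trmx0; apply: H2.
  by rewrite -[K](trmxK K) -trmx_mul Hc trmx0.
have rA : \rank Ap = r by rewrite -hr.
have rn : (r <= n)%N by rewrite -rA rank_leq_col.
have sub1 : (Ap <= kermx Kp)%MS.
  by apply/sub_kermxP; rewrite /Ap /Kp -map_mxM AK; apply/matrixP => a b; rewrite !mxE.
have sub2 : (kermx Kp <= Ap)%MS.
  rewrite -(mxrank_leqif_sup sub1).2 mxrank_ker rK rA; apply/eqP; lia.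
have sub3 : (map_mx tf p <= Ap)%MS.
  apply: submx_trans sub2; apply/sub_kermxP.
  by rewrite /Kp -map_mxM pK; apply/matrixP => a b; rewrite !mxE.
have [D ED] := submxP sub3.
have [f [c [fn0 Ec]]] := clear_den D.
have [nz Hpv'] := pivot_scale fn0 pn0.
exists (f *: p); split; last by rewrite Hpv'.
exists c; apply: map_tf_inj.
by rewrite map_mxM Ec -scalemxAl -ED map_mxZ.
Qed.

End Final.

Unset Implicit Arguments.

Theorem lemma4p2 (F : fieldType) (m n : nat) (A : 'M[{poly F}]_(m, n))
  (r : nat) (hr : prank A = r) (hr1 : (1 <= r)%N)
  (K : 'M[{poly F}]_(n, n - r)) (R : 'M[{poly F}]_(r, n)) :
  right_kernel_basis A K -> left_kernel_basis K R ->
  pivot_support A = pivot_support R.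
Proof.
move=> HK HR.
have [s1 m1] := ps_spec A; have [s2 m2] := ps_spec R.
apply: (irr_sorted_eq ltn_trans ltnn s1 s2) => x.
apply/idP/idP => h.
  by apply/m2; apply/(pivset_eq hr HK HR); apply/m1.
by apply/m1; apply/(pivset_eq hr HK HR); apply/m2.
Qed.
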